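(* Let $\gamma$ be a consistent family of grafts for a tree $\mathcal T$. Then the hybrid $\mathrm{hybr}(\mathcal T,\gamma)$ is a tree.
   Context: A tree is a pair $\mathcal T=(Q,<_{\mathcal T})$ with $<_{\mathcal T}$ irreflexive transitive such that each set $\{v:v<_{\mathcal T}x\}$ is well-ordered; nodes are elements of $Q$; $x\parallel_{\mathcal T}y$ means $x,y$ incomparable; $\max\mathcal T$ = set of maximal nodes; $0_{\mathcal T}$ = least node (if it exists); for a set $A$ of nodes $A{\downarrow}_{\mathcal T}=\{v:\exists a\in A\ a\le_{\mathcal T}v\}$; if $A$ is an antichain and $x\in A{\downarrow}_{\mathcal T}$, $\mathrm{root}_{\mathcal T}(x,A)$ is the unique $r\in A$ with $r\le_{\mathcal T}x$. A graft for $\mathcal T$ is a tree $\mathcal G$ with more than one node, with a least node $0_{\mathcal G}\in\mathrm{nodes}\,\mathcal T$, such that $\max\mathcal G\subseteq\{v\in\mathrm{nodes}\,\mathcal T: v>_{\mathcal T}0_{\mathcal G}\}$, $\max\mathcal G$ is an antichain in $\mathcal T$, and the implant $\mathrm{impl}\,\mathcal G:=\mathrm{nodes}\,\mathcal G\setminus(\{0_{\mathcal G}\}\cup\max\mathcal G)$ is disjoint from $\mathrm{nodes}\,\mathcal T$. The explant is $\mathrm{expl}(\mathcal T,\mathcal G)=\{v:v>_{\mathcal T}0_{\mathcal G}\}\setminus(\max\mathcal G){\downarrow}_{\mathcal T}$. A family $\gamma$ is a consistent family of grafts for $\mathcal T$ if each member is a graft for $\mathcal T$, distinct members have disjoint implants,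 and for distinct $\mathcal D,\mathcal E\in\gamma$: $0_{\mathcal D}\parallel_{\mathcal T}0_{\mathcal E}$, or $0_{\mathcal D}\in(\max\mathcal E){\downarrow}_{\mathcal T}$, or $0_{\mathcal E}\in(\max\mathcal D){\downarrow}_{\mathcal T}$. The support is $\mathrm{supp}(\mathcal T,\gamma)=\mathrm{nodes}\,\mathcal T\setminus\bigcup_{\mathcal G\in\gamma}\mathrm{expl}(\mathcal T,\mathcal G)$. The hybrid $\mathrm{hybr}(\mathcal T,\gamma)=(H,<)$ has $H=\mathrm{supp}(\mathcal T,\gamma)\cup\bigcup_{\mathcal G\in\gamma}\mathrm{impl}\,\mathcal G$ and $x<y$ iff one of: (b1) $x,y\in\mathrm{supp}$ and $x<_{\mathcal T}y$; (b2) for some $\mathcal G\in\gamma$, $x,y\in\mathrm{impl}\,\mathcal G$ and $x<_{\mathcal G}y$; (b3) for some $\mathcal G\in\gamma$, $x\in\mathrm{supp}$, $y\in\mathrm{impl}\,\mathcal G$, $x\le_{\mathcal T}0_{\mathcal G}$; (b4) for some $\mathcal G\in\gamma$, $x\in\mathrm{impl}\,\mathcal G$, $y\in\mathrm{supp}\cap(\max\mathcal G){\downarrow}_{\mathcal T}$, and $x<_{\mathcal G}\mathrm{root}_{\mathcal T}(y,\max\mathcal G)$; (b5) for some distinct $\mathcal D,\mathcal E\in\gamma$, $x\in\mathrm{impl}\,\mathcal D$, $y\in\mathrm{impl}\,\mathcal E$, $0_{\mathcal E}\in(\max\mathcal D){\downarrow}_{\mathcal T}$, and $x<_{\mathcal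 D}\mathrm{root}_{\mathcal T}(0_{\mathcal E},\max\mathcal D)$. *)

(* Defs.v *)
Set Implicit Arguments.

Record tree (U : Type) := mkTree { nodes : U -> Prop; tlt : U -> U -> Prop }.
Arguments mkTree {U}.

Section TreeDefs.
Variable U : Type.
Implicit Types (T G : tree U) (A : U -> Prop).

Definition tle T (x y : U) : Prop := x = y \/ tlt T x y.

Definition incomp T (x y : U) : Prop := ~ tle T x y /\ ~ tle T y x.

Definition well_ordered_by T A : Prop :=
  (forall a b, A a -> A b -> a = b \/ tlt T a b \/ tlt T b a) /\
  (forall S : U -> Prop, (forall a, S a -> A a) -> (exists a, S a) ->
     exists m, S m /\ forall a, S a -> tle T m a).

Definition is_tree T : Prop :=
  (forall x y, tlt T x y -> nodes T x /\ nodes T y) /\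
  (forall x, ~ tlt T x x) /\
  (forall x y z, tlt T x y -> tlt T y z -> tlt T x z) /\
  (forall x, nodes T x -> well_ordered_by T (fun v => tlt T v x)).

Definition max_nodes T (v : U) : Prop := nodes T v /\ ~ (exists w, tlt T v w).

Definition is_least T (z : U) : Prop :=
  nodes T z /\ forall v, nodes T v -> tle T z v.

Definition antichain T A : Prop :=
  forall a b, A a -> A b -> a <> b -> incomp T a b.

Definition down T A (v : U) : Prop := exists a, A a /\ tle T a v.

Definition is_root T A (x r : U) : Prop := A r /\ tle T r x.

Definition impl G (o : U) (v : U) : Prop :=
  nodes G v /\ v <> o /\ ~ max_nodes G v.

Definition is_graft T G (o : U) : Prop :=
  is_tree G /\
  (exists a b, nodes G a /\ nodes G b /\ a <> b) /\
  is_least G o /\ nodes T o /\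
  (forall v, max_nodes G v -> nodes T v /\ tlt T o v) /\
  antichain T (max_nodes G) /\
  (forall v, impl G o v -> ~ nodes T v).

Definition expl T G (o : U) (v : U) : Prop :=
  tlt T o v /\ ~ down T (max_nodes G) v.

(* A family gamma is given as an indexed family g : I -> tree U, together with
   the least nodes o i = 0_(g i); distinct members = distinct indices. *)
Definition consistent (I : Type) T (g : I -> tree U) (o : I -> U) : Prop :=
  (forall i, is_graft T (g i) (o i)) /\
  (forall i j, i <> j -> forall v, impl (g i) (o i) v -> ~ impl (g j) (o j) v) /\
  (forall i j, i <> j ->
     incomp T (o i) (o j) \/ down T (max_nodes (g j)) (o i)
     \/ down T (max_nodes (g i)) (o j)).

Definition supp (I : Type) T (g : I -> tree U) (o : I -> U) (v : U) : Prop :=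
  nodes T v /\ forall i, ~ expl T (g i) (o i) v.

Definition hybr_nodes (I : Type) T (g : I -> tree U) (o : I -> U) (v : U) : Prop :=
  supp T g o v \/ exists i, impl (g i) (o i) v.

Definition hybr_lt (I : Type) T (g : I -> tree U) (o : I -> U) (x y : U) : Prop :=
  (supp T g o x /\ supp T g o y /\ tlt T x y) \/
  (exists i, impl (g i) (o i) x /\ impl (g i) (o i) y /\ tlt (g i) x y) \/
  (exists i, supp T g o x /\ impl (g i) (o i) y /\ tle T x (o i)) \/
  (exists i, impl (g i) (o i) x /\ supp T g o y /\ down T (max_nodes (g i)) y /\
     exists r, is_root T (max_nodes (g i)) y r /\ tlt (g i) x r) \/
  (exists i j, i <> j /\ impl (g i) (o i) x /\ impl (g j) (o j) y /\
     down T (max_nodes (g i)) (o j) /\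
     exists r, is_root T (max_nodes (g i)) (o j) r /\ tlt (g i) x r).

Definition hybr (I : Type) T (g : I -> tree U) (o : I -> U) : tree U :=
  mkTree (hybr_nodes T g o) (hybr_lt T g o).

End TreeDefs.

(* Main.v *)
Require Import Defs.
From Stdlib Require Import Classical.

Section Gen.
Variables (U : Type) (G : tree U).
Hypothesis HG : is_tree G.
Lemma t_nodes x y : tlt G x y -> nodes G x /\ nodes G y.
Proof. destruct HG as [h _]; auto. Qed.
Lemma t_irr x : ~ tlt G x x. Proof. destruct HG as [_ [h _]]; auto. Qed.
Lemma t_tr x y z : tlt G x y -> tlt G y z -> tlt G x z.
Proof. destruct HG as [_ [_ [h _]]]; eauto. Qed.
Lemma t_wf x : nodes G x -> well_ordered_by G (fun v => tlt G v x).
Proof. destruct HG as [_ [_ [_ h]]]; auto. Qed.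
Lemma le_lt x y z : tle G x y -> tlt G y z -> tlt G x z.
Proof. intros [->|h] h2; eauto using t_tr. Qed.
Lemma lt_le x y z : tlt G x y -> tle G y z -> tlt G x z.
Proof. intros h [<-|h2]; eauto using t_tr. Qed.
Lemma le_le x y z : tle G x y -> tle G y z -> tle G x z.
Proof. intros [->|h] h2; auto. right. eapply lt_le; eauto. Qed.
Lemma lt_le_F x y : tlt G x y -> tle G y x -> False.
Proof. intros h h2. apply (t_irr x). eapply lt_le; eauto. Qed.
Lemma lt_W x y : tlt G x y -> tle G x y. Proof. right; auto. Qed.
Lemma le_refl x : tle G x x. Proof. left; auto. Qed.
Lemma t_comp a b y : tle G a y -> tle G b y -> a = b \/ tlt G a b \/ tlt G b a.
Proof.
  intros [->|ha] [->|hb]; auto.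
  apply (proj1 (t_wf y (proj2 (t_nodes _ _ ha)))); auto.
Qed.
Lemma t_comp_lt a b y : tlt G a y -> tlt G b y -> a = b \/ tlt G a b \/ tlt G b a.
Proof. intros; apply (t_comp a b y); right; auto. Qed.
Lemma t_least y (P : U -> Prop) : nodes G y -> (forall x, P x -> tlt G x y) -> (exists x, P x) ->
  exists m, P m /\ forall x, P x -> tle G m x.
Proof. intros hy hP hne. apply (proj2 (t_wf y hy)); auto. Qed.
End Gen.

Section Hyb.
Variables (U : Type) (T : tree U) (I : Type) (g : I -> tree U) (o : I -> U).
Hypothesis HT : is_tree T.
Hypothesis HC : consistent T g o.

Local Notation Sp := (supp T g o).
Local Notation Im i := (impl (g i) (o i)).
Local Notation M i := (max_nodes (g i)).
Local Notation Hl := (hybr_lt T g o).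

Lemma gtree i : is_tree (g i). Proof. destruct (proj1 HC i) as [a [b [c [d [e [f h]]]]]]; auto. Qed.
Lemma gleast i : is_least (g i) (o i). Proof. destruct (proj1 HC i) as [a [b [c [d [e [f h]]]]]]; auto. Qed.
Lemma gonode i : nodes T (o i). Proof. destruct (proj1 HC i) as [a [b [c [d [e [f h]]]]]]; auto. Qed.
Lemma gmax i v : M i v -> nodes T v /\ tlt T (o i) v. Proof. destruct (proj1 HC i) as [a [b [c [d [e [f h]]]]]]; auto. Qed.
Lemma ganti i : antichain T (M i). Proof. destruct (proj1 HC i) as [a [b [c [d [e [f h]]]]]]; auto. Qed.
Lemma gimpl i v : Im i v -> ~ nodes T v. Proof. destruct (proj1 HC i) as [a [b [c [d [e [f h]]]]]]; auto. Qed.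

Lemma Sp_node x : Sp x -> nodes T x. Proof. intros [h _]; auto. Qed.
Lemma Sp_Im i x : Sp x -> Im i x -> False.
Proof. intros h1 h2. exact (gimpl i x h2 (Sp_node x h1)). Qed.
Lemma Im_Im i j x : Im i x -> Im j x -> i = j.
Proof. intros h1 h2. apply NNPP; intro hn. exact (proj1 (proj2 HC) i j hn x h1 h2). Qed.

Lemma root_uniq i r1 r2 y : M i r1 -> M i r2 -> tle T r1 y -> tle T r2 y -> r1 = r2.
Proof.
  intros m1 m2 l1 l2. apply NNPP; intro hn.
  destruct (ganti i r1 r2 m1 m2 hn) as [n1 n2].
  destruct (t_comp _ _ HT r1 r2 y l1 l2) as [e|[h|h]]; auto.
  apply n1; right; auto. apply n2; right; auto.
Qed.

Lemma D_o i : down T (M i) (o i) -> False.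
Proof.
  intros [m [hm hl]]. apply (lt_le_F _ _ HT (o i) m); auto. apply (gmax i m hm).
Qed.

Lemma supp_D i a : Sp a -> tlt T (o i) a -> down T (M i) a.
Proof.
  intros [_ h] hl. apply NNPP; intro hn. apply (h i). split; auto.
Qed.

Lemma Sp_o j : Sp (o j).
Proof.
  split. apply gonode. intros i [hl hn].
  destruct (classic (i = j)) as [->|hij]. exact (t_irr _ _ HT _ hl).
  destruct (proj2 (proj2 HC) i j hij) as [[n1 n2]|[hd|hd]].
  - apply n1; right; auto.
  - destruct hd as [m [hm hle]]. apply (t_irr _ _ HT (o i)).
    apply (t_tr _ _ HT _ (o j)); auto. eapply lt_le; eauto. apply (gmax j m hm).
  - auto.
Qed.

Lemma Im_facts i x : Im i x -> nodes (g i) x /\ x <> o i.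
Proof. intros [a [b _]]; auto. Qed.

Ltac spim := exfalso; match goal with h1 : supp T g o ?z, h2 : impl (g ?i) (o ?i) ?z |- _ => exact (Sp_Im i z h1 h2) end.
Lemma mk1 x y : Sp x -> Sp y -> tlt T x y -> Hl x y.
Proof. unfold hybr_lt; intros; left; auto. Qed.
Lemma mk2 i x y : Im i x -> Im i y -> tlt (g i) x y -> Hl x y.
Proof. unfold hybr_lt; intros; right; left; eauto. Qed.
Lemma mk3 i x y : Sp x -> Im i y -> tle T x (o i) -> Hl x y.
Proof. unfold hybr_lt; intros; right; right; left; eauto. Qed.
Lemma mk4 i r x y : Im i x -> Sp y -> M i r -> tle T r y -> tlt (g i) x r -> Hl x y.
Proof.
  unfold hybr_lt; intros; right; right; right; left. exists i.
  split; [auto|split;[auto|split;[exists r; split; auto| exists r; split; [split; auto| auto]]]].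
Qed.
Lemma mk5 i j r x y : i <> j -> Im i x -> Im j y -> M i r -> tle T r (o j) -> tlt (g i) x r -> Hl x y.
Proof.
  unfold hybr_lt; intros; right; right; right; right. exists i, j.
  do 3 (split; [auto|]). split;[exists r; split; auto| exists r; split; [split; auto| auto]].
Qed.

Lemma Hcases x y : Hl x y ->
  (Sp x /\ Sp y /\ tlt T x y) \/
  (exists i, Im i x /\ Im i y /\ tlt (g i) x y) \/
  (exists i, Sp x /\ Im i y /\ tle T x (o i)) \/
  (exists i r, Im i x /\ Sp y /\ M i r /\ tle T r y /\ tlt (g i) x r) \/
  (exists i j r, i <> j /\ Im i x /\ Im j y /\ M i r /\ tle T r (o j) /\ tlt (g i) x r).
Proof.
  unfold hybr_lt; intros [h|[h|[h|[h|h]]]]; auto.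
  - right; right; right; left. destruct h as [i [h1 [h2 [_ [r [[h3 h4] h5]]]]]].
    exists i, r; tauto.
  - right; right; right; right. destruct h as [i [j [hij [h1 [h2 [_ [r [[h3 h4] h5]]]]]]]].
    exists i, j, r; tauto.
Qed.

Lemma PredS x y : Sp y -> Hl x y ->
  (Sp x /\ tlt T x y) \/ (exists i r, Im i x /\ M i r /\ tle T r y /\ tlt (g i) x r).
Proof.
  intros hy h. destruct (Hcases x y h) as [[?[??]]|[[i[?[??]]]|[[i[?[??]]]|[[i[r[?[?[?[??]]]]]]|[i[j[r[?[?[??]]]]]]]]]].
  - tauto.
  - spim.
  - spim.
  - right; exists i, r; tauto.
  - spim.
Qed.

Lemma PredIm j x y : Im j y -> Hl x y ->
  (Im j x /\ tlt (g j) x y) \/ (Sp x /\ tle T x (o j)) \/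
  (exists i r, i <> j /\ Im i x /\ M i r /\ tle T r (o j) /\ tlt (g i) x r).
Proof.
  intros hy h. destruct (Hcases x y h) as [[?[??]]|[[i[?[??]]]|[[i[?[??]]]|[[i[r[?[?[?[??]]]]]]|[i[k[r[?[?[?[?[??]]]]]]]]]]]].
  - spim.
  - assert (i = j) by (apply (Im_Im i j y); assumption). subst. tauto.
  - assert (i = j) by (apply (Im_Im i j y); assumption). subst. tauto.
  - spim.
  - assert (k = j) by (apply (Im_Im k j y); assumption). subst. right; right. exists i, r; tauto.
Qed.

Lemma SrcS x y : Sp x -> Hl x y ->
  (Sp y /\ tlt T x y) \/ (exists k, Im k y /\ tle T x (o k)).
Proof.
  intros hx h. destruct (Hcases x y h) as [[?[??]]|[[i[?[??]]]|[[i[?[??]]]|[[i[r[?[?[?[??]]]]]]|[i[j[r[?[?[??]]]]]]]]]].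
  - tauto.
  - spim.
  - right; exists i; tauto.
  - spim.
  - spim.
Qed.

Lemma SrcIm i x y : Im i x -> Hl x y ->
  (Im i y /\ tlt (g i) x y) \/ (Sp y /\ exists r, M i r /\ tle T r y /\ tlt (g i) x r) \/
  (exists k r, i <> k /\ Im k y /\ M i r /\ tle T r (o k) /\ tlt (g i) x r).
Proof.
  intros hx h. destruct (Hcases x y h) as [[?[??]]|[[i'[?[??]]]|[[i'[?[??]]]|[[i'[r[?[?[?[??]]]]]]|[i'[k[r[?[?[?[?[??]]]]]]]]]]]].
  - spim.
  - assert (i' = i) by (apply (Im_Im i' i x); assumption). subst. tauto.
  - spim.
  - assert (i' = i) by (apply (Im_Im i' i x); assumption). subst. right; left; split; auto; exists r; tauto.
  - assert (i' = i) by (apply (Im_Im i' i x); assumption). subst. right; right. exists k, r; tauto.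
Qed.


Definition Ttr := @t_tr U T HT.
Definition Tlel := @le_lt U T HT.
Definition Tltle := @lt_le U T HT.
Definition Tlele := @le_le U T HT.
Definition TF := @lt_le_F U T HT.
Arguments Ttr {x y z}. Arguments Tlel {x y z}. Arguments Tltle {x y z}.
Arguments Tlele {x y z}. Arguments TF {x y}.
Definition Gtr i := @t_tr U (g i) (gtree i).
Arguments Gtr i {x y z}.
Definition omax i r (h : M i r) : tlt T (o i) r := proj2 (gmax i r h).

Lemma Htr x y z : Hl x y -> Hl y z -> Hl x z.
Proof.
  intros h1 h2.
  destruct (Hcases x y h1) as [[hx[hy l]]|[[i[hx[hy l]]]|[[i[hx[hy l]]]|[[i[r[hx[hy[hr[lr l]]]]]]|[i[j[r[hij[hx[hy[hr[lr l]]]]]]]]]]]].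
  - destruct (SrcS y z hy h2) as [[hz l2]|[k [hz l2]]].
    + exact (mk1 x z hx hz (Ttr l l2)).
    + exact (mk3 k x z hx hz (lt_W _ _ _ _ (Tltle l l2))).
  - destruct (SrcIm i y z hy h2) as [[hz l2]|[[hz [r [hr [lr l2]]]]|[k [r [hik [hz [hr [lr l2]]]]]]]].
    + exact (mk2 i x z hx hz (Gtr i l l2)).
    + exact (mk4 i r x z hx hz hr lr (Gtr i l l2)).
    + exact (mk5 i k r x z hik hx hz hr lr (Gtr i l l2)).
  - destruct (SrcIm i y z hy h2) as [[hz l2]|[[hz [r [hr [lr l2]]]]|[k [r [hik [hz [hr [lr l2]]]]]]]].
    + exact (mk3 i x z hx hz l).
    + exact (mk1 x z hx hz (Tltle (Tlel l (omax i r hr)) lr)).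
    + exact (mk3 k x z hx hz (lt_W _ _ _ _ (Tltle (Tlel l (omax i r hr)) lr))).
  - destruct (SrcS y z hy h2) as [[hz l2]|[k [hz l2]]].
    + exact (mk4 i r x z hx hz hr (lt_W _ _ _ _ (Tlel lr l2)) l).
    + assert (hik : i <> k).
      { intro e; subst k. exact (TF (omax i r hr) (Tlele lr l2)). }
      exact (mk5 i k r x z hik hx hz hr (Tlele lr l2) l).
  - destruct (SrcIm j y z hy h2) as [[hz l2]|[[hz [r' [hr' [lr' l2]]]]|[k [r' [hjk [hz [hr' [lr' l2]]]]]]]].
    + exact (mk5 i j r x z hij hx hz hr lr l).
    + exact (mk4 i r x z hx hz hr (lt_W _ _ _ _ (Tltle (Tlel lr (omax j r' hr')) lr')) l).
    + assert (hik : i <> k).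
      { intro e; subst k. exact (TF (omax i r hr) (lt_W _ _ _ _ (Tltle (Tlel lr (omax j r' hr')) lr'))). }
      exact (mk5 i k r x z hik hx hz hr (lt_W _ _ _ _ (Tltle (Tlel lr (omax j r' hr')) lr')) l).
Qed.

Lemma Hnodes x y : Hl x y -> hybr_nodes T g o x /\ hybr_nodes T g o y.
Proof.
  unfold hybr_nodes; intro h.
  destruct (Hcases x y h) as [[hx[hy l]]|[[i[hx[hy l]]]|[[i[hx[hy l]]]|[[i[r[hx[hy[hr[lr l]]]]]]|[i[j[r[hij[hx[hy[hr[lr l]]]]]]]]]]]];
  split; eauto.
Qed.

Lemma Hirr x : ~ Hl x x.
Proof.
  intro h.
  destruct (Hcases x x h) as [[hx[hy l]]|[[i[hx[hy l]]]|[[i[hx[hy l]]]|[[i[r[hx[hy[hr[lr l]]]]]]|[i[j[r[hij[hx[hy[hr[lr l]]]]]]]]]]]].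
  - exact (t_irr _ _ HT x l).
  - exact (t_irr _ _ (gtree i) x l).
  - spim.
  - spim.
  - exact (hij (Im_Im i j x hx hy)).
Qed.

Lemma MixS y a i b r : Sp y -> Sp a -> tlt T a y -> Im i b -> M i r -> tle T r y ->
  tlt (g i) b r -> Hl a b \/ Hl b a.
Proof.
  intros hy hSa ha hb hr lr lb.
  pose proof (omax i r hr) as hor.
  pose proof (Tltle hor lr) as hoy.
  destruct (t_comp _ _ HT a (o i) y (lt_W _ _ _ _ ha) (lt_W _ _ _ _ hoy)) as [e|[l|l]].
  - left. apply (mk3 i a b); auto. left; auto.
  - left. apply (mk3 i a b); auto. right; auto.
  - destruct (t_comp _ _ HT a r y (lt_W _ _ _ _ ha) lr) as [e|[l2|l2]].
    + right. apply (mk4 i r b a); auto. left; congruence.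
    + exfalso. destruct (supp_D i a hSa l) as [m [hm lm]].
      assert (m = r) by (apply (root_uniq i m r y); auto; exact (Tlele lm (lt_W _ _ _ _ ha))).
      subst m. exact (TF l2 lm).
    + right. apply (mk4 i r b a); auto. right; auto.
Qed.

Lemma ImIm y i a r k b r' : Sp y -> Im i a -> M i r -> tle T r y -> tlt (g i) a r ->
  Im k b -> M k r' -> tle T r' y -> tlt (g k) b r' -> a = b \/ Hl a b \/ Hl b a.
Proof.
  intros hy ha hr lr la hb hr' lr' lb.
  destruct (classic (i = k)) as [e|hik].
  - subst k. assert (r = r') by (apply (root_uniq i r r' y); auto). subst r'.
    destruct (t_comp_lt _ _ (gtree i) a b r la lb) as [e|[l|l]]; auto.
    + right; left; exact (mk2 i a b ha hb l).
    + right; right; exact (mk2 i b a hb ha l).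
  - pose proof (Tltle (omax i r hr) lr) as hoi.
    pose proof (Tltle (omax k r' hr') lr') as hok.
    destruct (t_comp _ _ HT (o i) (o k) y (lt_W _ _ _ _ hoi) (lt_W _ _ _ _ hok)) as [e|[l|l]].
    + exfalso. destruct (proj2 (proj2 HC) i k hik) as [[n1 n2]|[hd|hd]].
      * apply n1; left; auto.
      * rewrite e in hd. exact (D_o k hd).
      * rewrite <- e in hd. exact (D_o i hd).
    + destruct (supp_D i (o k) (Sp_o k) l) as [m [hm lm]].
      assert (m = r) by (apply (root_uniq i m r y); auto; exact (Tlele lm (lt_W _ _ _ _ hok))).
      subst m. right; left. exact (mk5 i k r a b hik ha hb hr lm la).
    + destruct (supp_D k (o i) (Sp_o i) l) as [m [hm lm]].
      assert (m = r') by (apply (root_uniq k m r' y); auto; exact (Tlele lm (lt_W _ _ _ _ hoi))).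
      subst m. right; right. exact (mk5 k i r' b a (fun e => hik (eq_sym e)) hb ha hr' lm lb).
Qed.

Lemma trichS y a b : Sp y -> Hl a y -> Hl b y -> a = b \/ Hl a b \/ Hl b a.
Proof.
  intros hy ha hb.
  destruct (PredS a y hy ha) as [[hSa la]|[i [r [hia [hr [lr la]]]]]];
  destruct (PredS b y hy hb) as [[hSb lb]|[k [r' [hkb [hr' [lr' lb]]]]]].
  - destruct (t_comp_lt _ _ HT a b y la lb) as [e|[l|l]]; auto.
    + right; left; exact (mk1 a b hSa hSb l).
    + right; right; exact (mk1 b a hSb hSa l).
  - right. exact (MixS y a k b r' hy hSa la hkb hr' lr' lb).
  - right. destruct (MixS y b i a r hy hSb lb hia hr lr la); auto.
  - exact (ImIm y i a r k b r' hy hia hr lr la hkb hr' lr' lb).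
Qed.

Lemma leastS y (P : U -> Prop) : Sp y -> (forall x, P x -> Hl x y) -> (exists x, P x) ->
  exists m, P m /\ forall x, P x -> m = x \/ Hl m x.
Proof.
  intros hy hP [x0 hx0].
  set (Q := fun v => exists x, P x /\ ((Sp x /\ v = x) \/
     exists i r, Im i x /\ M i r /\ tle T r y /\ tlt (g i) x r /\ v = o i)).
  assert (hQ : forall v, Q v -> tlt T v y).
  { intros v [x [hx [[hSx e]|[i [r [hi [hr [lr [l e]]]]]]]]]; subst v.
    - destruct (PredS x y hy (hP x hx)) as [[_ l]|[i [r [hi _]]]]; auto. spim.
    - exact (Tltle (omax i r hr) lr). }
  assert (hQne : exists v, Q v).
  { destruct (PredS x0 y hy (hP x0 hx0)) as [[hS _]|[i [r [hi [hr [lr l]]]]]].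
    - exists x0, x0; auto.
    - exists (o i), x0; split; auto. right; exists i, r; auto 10. }
  destruct (t_least _ _ HT y Q (Sp_node y hy) hQ hQne) as [v0 [hv0 hmin]].
  destruct (classic (P v0 /\ Sp v0)) as [[Pv Sv]|nA].
  - exists v0; split; auto. intros x hx.
    destruct (trichS y v0 x hy (hP v0 Pv) (hP x hx)) as [e|[h|h]]; auto.
    exfalso. destruct (PredS x v0 Sv h) as [[hSx l]|[i [r [hi [hr [lr l]]]]]].
    + exact (TF l (hmin x (ex_intro _ x (conj hx (or_introl (conj hSx eq_refl)))))).
    + assert (Q (o i)).
      { exists x; split; auto. right; exists i, r; split; [exact hi|split;[exact hr|split;[|split;[exact l|reflexivity]]]].
        exact (Tlele lr (lt_W _ _ _ _ (hQ v0 hv0))). }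
      exact (TF (Tltle (omax i r hr) lr) (hmin _ H)).
  - destruct hv0 as [x1 [hx1 [[hS1 e]|[i [r1 [hi1 [hr1 [lr1 [l1 e]]]]]]]]].
    { subst v0. exfalso; auto. }
    assert (hR : forall x, (P x /\ Im i x) -> tlt (g i) x r1).
    { intros x [hx hix]. destruct (PredS x y hy (hP x hx)) as [[hSx _]|[k [r [hk [hr [lr l]]]]]].
      - spim.
      - assert (k = i) by (apply (Im_Im k i x); assumption). subst k.
        assert (r = r1) by (apply (root_uniq i r r1 y); auto). subst r. auto. }
    destruct (t_least _ _ (gtree i) r1 (fun x => P x /\ Im i x) (proj1 hr1) hR
                (ex_intro _ x1 (conj hx1 hi1))) as [x0' [[hP0 hI0] hmin0]].
    exists x0'; split; auto. intros x hx.
    destruct (trichS y x0' x hy (hP x0' hP0) (hP x hx)) as [e'|[h|h]]; auto.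
    exfalso. destruct (PredIm i x x0' hI0 h) as [[hix l]|[[hSx l]|[k [r [hki [hk [hr [lr l]]]]]]]].
    + exact (lt_le_F _ _ (gtree i) _ _ l (hmin0 x (conj hx hix))).
    + assert (hq : tle T v0 x) by (apply hmin; exists x; split; auto).
      rewrite e in hq. destruct l as [e2|l].
      * apply nA. rewrite e, <- e2. auto.
      * exact (TF l hq).
    + assert (Q (o k)).
      { exists x; split; auto. right; exists k, r; split; [exact hk|split;[exact hr|split;[|split;[exact l|reflexivity]]]].
        exact (lt_W _ _ _ _ (Tltle (Tlel lr (omax i r1 hr1)) lr1)). }
      pose proof (hmin _ H) as hq. rewrite e in hq.
      exact (TF (Tltle (omax k r hr) lr) hq).
Qed.

Lemma ImPred j x y : Im j y -> Hl x y -> (Im j x /\ tlt (g j) x y) \/ x = o j \/ Hl x (o j).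
Proof.
  intros hy h. destruct (PredIm j x y hy h) as [h1|[[hx l]|[i [r [hij [hx [hr [lr l]]]]]]]]; auto.
  - destruct l as [e|l]; auto. right; right; exact (mk1 x (o j) hx (Sp_o j) l).
  - right; right; exact (mk4 i r x (o j) hx (Sp_o j) hr lr l).
Qed.

Lemma oj_lt j y : Im j y -> Hl (o j) y.
Proof. intro hy. apply (mk3 j (o j) y (Sp_o j) hy). left; auto. Qed.

Lemma trichIm j y a b : Im j y -> Hl a y -> Hl b y -> a = b \/ Hl a b \/ Hl b a.
Proof.
  intros hy ha hb.
  destruct (ImPred j a y hy ha) as [[hia la]|[ea|la]];
  destruct (ImPred j b y hy hb) as [[hib lb]|[eb|lb]].
  - destruct (t_comp_lt _ _ (gtree j) a b y la lb) as [e|[l|l]]; auto.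
    + right; left; exact (mk2 j a b hia hib l).
    + right; right; exact (mk2 j b a hib hia l).
  - subst b. right; right. exact (oj_lt j a hia).
  - right; right. exact (Htr b (o j) a lb (oj_lt j a hia)).
  - subst a. right; left. exact (oj_lt j b hib).
  - left; congruence.
  - subst a. right; right; auto.
  - right; left. exact (Htr a (o j) b la (oj_lt j b hib)).
  - subst b. right; left; auto.
  - exact (trichS (o j) a b (Sp_o j) la lb).
Qed.

Lemma leastIm j y (P : U -> Prop) : Im j y -> (forall x, P x -> Hl x y) -> (exists x, P x) ->
  exists m, P m /\ forall x, P x -> m = x \/ Hl m x.
Proof.
  intros hy hP hne.
  destruct (classic (exists x, P x /\ Hl x (o j))) as [hE|nE].
  - destruct (leastS (o j) (fun x => P x /\ Hl x (o j)) (Sp_o j) (fun x h => proj2 h) hE)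
      as [m [[hPm hm] hmin]].
    exists m; split; auto. intros x hx.
    destruct (ImPred j x y hy (hP x hx)) as [[hix _]|[e|h]].
    + right. exact (Htr m (o j) x hm (oj_lt j x hix)).
    + subst x; auto.
    + apply hmin; auto.
  - destruct (classic (P (o j))) as [hPo|nPo].
    + exists (o j); split; auto. intros x hx.
      destruct (ImPred j x y hy (hP x hx)) as [[hix _]|[e|h]].
      * right. exact (oj_lt j x hix).
      * left; auto.
      * exfalso; apply nE; exists x; auto.
    + assert (hR : forall x, P x -> Im j x /\ tlt (g j) x y).
      { intros x hx. destruct (ImPred j x y hy (hP x hx)) as [h|[e|h]]; auto.
        - subst x; contradiction.
        - exfalso; apply nE; exists x; auto. }
      destruct (t_least _ _ (gtree j) y P (proj1 (Im_facts j y hy)) (fun x h => proj2 (hR x h)) hne)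
        as [m [hPm hmin]].
      exists m; split; auto. intros x hx. destruct (hmin x hx) as [e|l]; auto.
      right. exact (mk2 j m x (proj1 (hR m hPm)) (proj1 (hR x hx)) l).
Qed.

Lemma hybr_tree : is_tree (hybr T g o).
Proof.
  split; [|split; [|split]]; simpl.
  - exact Hnodes.
  - exact Hirr.
  - exact Htr.
  - intros y [hy|[j hy]]; split; simpl.
    + intros a b ha hb. exact (trichS y a b hy ha hb).
    + intros P hP hne. exact (leastS y P hy hP hne).
    + intros a b ha hb. exact (trichIm j y a b hy ha hb).
    + intros P hP hne. exact (leastIm j y P hy hP hne).
Qed.
End Hyb.

Theorem mainTheorem7 (U : Type) (T : tree U) (I : Type)
  (g : I -> tree U) (o : I -> U) :
  is_tree T -> consistent T g o -> is_tree (hybr T g o).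
Proof. intros HT HC. exact (hybr_tree U T I g o HT HC). Qed.
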